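(* Let $n\ge2$, $k\ge1$, and let $\partial_k$ denote the distance in $H_{n,k}$. Let $\mathbf z^{01}=x_1\ldots x_k$ be any vertex with $x_i=0$ for all odd $i$ and $x_i\neq0$ for all even $i$, and let $\mathbf z^{10}=x_1\ldots x_k$ be any vertex with $x_i\ne0$ for all odd $i$ and $x_i=0$ for all even $i$. Then (a) $\partial_k(\mathbf z^{01},\mathbf r)=\partial_k(\mathbf z^{10},P)=k-1$; (b) $\partial_k(\mathbf z^{10},\mathbf r)=\partial_k(\mathbf z^{01},P)=k$.
   Context: Let $n\ge 2$ and $k\ge 1$ be integers. $H_{n,k}$ is the simple undirected graph with vertex set $V_{n,k}=\mathbb{Z}_n^k$ (so $|V_{n,k}|=n^k$), whose vertices are written as strings $x_1x_2\ldots x_k$ with $x_j\in\mathbb{Z}_n=\{0,1,\ldots,n-1\}$. Two distinct vertices are adjacent if and only if they are related by one of the following rules. For $i=0$ the prefix $x_1\ldots x_i$ is empty, and ''$0\ldots0$'' denotes a string of zeros completing the word to length $k$. (R1) $x_1\ldots x_{k-1}x_k\sim x_1\ldots x_{k-1}y_k$ whenever $y_k\neq x_k$. (R2) For $0\le i\le k-2$: $x_1\ldots x_i0\ldots0\sim x_1\ldots x_ix_{i+1}\ldots x_k$ whenever $x_j\neq 0$ for all $i+1\le j\le k$. (R3) For $1\le i\le k-1$: $x_1\ldots x_{i-1}x_i0\ldots0\sim x_1\ldots x_{i-1}y_i0\ldots0$ whenever $x_i,y_i\neq0$ and $x_i\ne y_i$. In particular, $H_{n,1}$ is the complete graph $K_n$.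 The root of $H_{n,k}$ is $\mathbf r=00\ldots0$; a vertex of $H_{n,k}$ is peripheral if all its coordinates are nonzero, and $P$ denotes the set of peripheral vertices. For a vertex $\mathbf x$ and a vertex set $U$, $\partial(\mathbf x,U)=\min_{\mathbf u\in U}\partial(\mathbf x,\mathbf u)$. *)

(* Defs.v *)
From mathcomp Require Import all_boot.
Set Implicit Arguments. Unset Strict Implicit. Unset Printing Implicit Defensive.

(* Vertices of H_{n,k}: words x_1..x_k over Z_n, encoded as finite functions
   'I_k -> 'I_n; paper position i (1-based) is ordinal index i-1. *)
Definition V (n k : nat) := {ffun 'I_k -> 'I_n}.

Definition isz n (a : 'I_n) : bool := val a == 0.

Definition R1 n k (x y : V n k) : bool :=
  [forall j : 'I_k, (j.+1 < k) ==> (x j == y j)].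

(* (R2) with prefix length p = i, 0 <= p <= k-2 :
   x = x_1..x_p 0..0  and  y = x_1..x_p y_{p+1}..y_k with all y_j <> 0. *)
Definition R2 n k (x y : V n k) : bool :=
  [exists p : 'I_k, (p.+2 <= k) &&
    [forall j : 'I_k, ((j < p) ==> (x j == y j)) &&
                      ((p <= j) ==> (isz (x j) && ~~ isz (y j)))]].

(* (R3) with i = p+1, 1 <= i <= k-1 :
   x = x_1..x_{i-1} x_i 0..0, y = x_1..x_{i-1} y_i 0..0, x_i,y_i <> 0, x_i <> y_i. *)
Definition R3 n k (x y : V n k) : bool :=
  [exists p : 'I_k, (p.+1 < k) &&
    [&& ~~ isz (x p), ~~ isz (y p), x p != y p &
     [forall j : 'I_k, ((j < p) ==> (x j == y j)) &&
                       ((p < j) ==> (isz (x j) && isz (y j)))]]].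

Definition Hadj n k : rel (V n k) := fun x y =>
  (x != y) && [|| R1 x y, R2 x y, R2 y x, R3 x y | R3 y x].

Fixpoint walk_le (T : finType) (e : rel T) (d : nat) (x y : T) : bool :=
  if d is d'.+1 then (x == y) || [exists z, e x z && walk_le e d' z y]
  else x == y.

(* graph distance: the least d with a walk of length <= d (walks of length
   <= #|T| suffice in a finite graph; #|T|.+1 if unreachable). *)
Definition gdist (T : finType) (e : rel T) (x y : T) : nat :=
  find (fun d => walk_le e d x y) (iota 0 #|T|.+1).

Definition gdist_set (T : finType) (e : rel T) (x : T) (U : {set T}) : nat :=
  \big[minn/#|T|.+1]_(u in U) gdist e x u.

Definition root_vx n k (hn : 0 < n) : V n k := [ffun _ => Ordinal hn].

Definition periph n k : {set V n k} := [set x : V n k | [forall j : 'I_k, ~~ isz (x j)]].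

(* Main.v *)
Require Import Defs.
From mathcomp Require Import all_boot zify.
Set Implicit Arguments. Unset Strict Implicit. Unset Printing Implicit Defensive.

Definition step (a : nat) (s : nat * nat) : nat * nat :=
  if a == 0 then (s.1, s.1.+1) else (s.2.+1, s.2).
Definition close (s t : nat * nat) :=
  [&& s.1 <= t.1.+1, t.1 <= s.1.+1, s.2 <= t.2.+1 & t.2 <= s.2.+1].
Definition Lw n k (x : V n k) : seq nat := [seq val (x i) | i <- enum 'I_k].
Definition pot n k (x : V n k) := foldr step (0,0) (Lw x).

Lemma close_step a s t : close s t -> close (step a s) (step a t).
Proof.
case: s t => [s1 s2] [t1 t2]; rewrite /close /step /=.
case: eqP => _ /= /and4P[? ? ? ?]; apply/and4P; split; lia.
Qed.

Lemma close_sym s t : close s t -> close t s.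
Proof. case: s t => [s1 s2] [t1 t2]; rewrite /close /= => /and4P[? ? ? ?]; apply/and4P; split; lia. Qed.

Lemma close_refl s : close s s.
Proof. case: s => [s1 s2]; rewrite /close /=; apply/and4P; split; lia. Qed.

Lemma fold_close p : forall l1 l2, size l1 = size l2 ->
  (forall j, j < p -> nth 0 l1 j = nth 0 l2 j) ->
  close (foldr step (0,0) (drop p l1)) (foldr step (0,0) (drop p l2)) ->
  close (foldr step (0,0) l1) (foldr step (0,0) l2).
Proof.
elim: p => [|p IH] l1 l2 Hs Hn; first by rewrite !drop0.
case: l1 l2 Hs Hn => [|a l1] [|b l2] //= [Hs] Hn Hc.
have ->: a = b by apply: (Hn 0).
apply: close_step; apply: IH => // j Hj; exact: (Hn j.+1).
Qed.

Lemma fold_zero l : all (fun a => a == 0) l -> (foldr step (0,0) l).1 = 0.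
Proof. elim: l => //= a l IH /andP[/eqP-> H]; by rewrite /step eqxx /= IH. Qed.

Lemma fold_zero1 l : l != [::] -> all (fun a => a == 0) l -> foldr step (0,0) l = (0,1).
Proof. case: l => //= a l _ /andP[/eqP-> H]; by rewrite /step eqxx /= (fold_zero H). Qed.

Lemma fold_nz l : all (fun a => a != 0) l -> (foldr step (0,0) l).2 = 0.
Proof. elim: l => //= a l IH /andP[Ha H]; by rewrite /step (negbTE Ha) /= IH. Qed.

Lemma fold_nz1 l : l != [::] -> all (fun a => a != 0) l -> foldr step (0,0) l = (1,0).
Proof. case: l => //= a l _ /andP[Ha H]; by rewrite /step (negbTE Ha) /= (fold_nz H). Qed.


Lemma fold_small m : size m <= 1 ->
  (foldr step (0,0) m).1 <= 1 /\ (foldr step (0,0) m).2 <= 1.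
Proof. case: m => [|a [|b m]] //= _; rewrite /step; case: eqP => /=; lia. Qed.

Lemma close_small s t : s.1 <= 1 -> s.2 <= 1 -> t.1 <= 1 -> t.2 <= 1 -> close s t.
Proof. move=> *; apply/and4P; split; lia. Qed.

Lemma size_Lw n k (x : V n k) : size (Lw x) = k.
Proof. by rewrite size_map size_enum_ord. Qed.

Lemma nth_Lw n k (x : V n k) (j : 'I_k) : nth 0 (Lw x) j = x j.
Proof. by rewrite /Lw (nth_map j) ?size_enum_ord // nth_ord_enum. Qed.

Lemma drop_all n k (x : V n k) p (P : pred nat) :
  (forall j : 'I_k, p <= j -> P (x j)) -> all P (drop p (Lw x)).
Proof.
move=> H; apply/(all_nthP 0) => i; rewrite size_drop size_Lw nth_drop => hi.
have hk : p + i < k by lia.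
by rewrite (nth_Lw x (Ordinal hk)); apply: H => /=; lia.
Qed.

Lemma prefix_close n k (x y : V n k) p :
  (forall j : 'I_k, j < p -> x j = y j) ->
  close (foldr step (0,0) (drop p (Lw x))) (foldr step (0,0) (drop p (Lw y))) ->
  close (pot x) (pot y).
Proof.
move=> H; apply: fold_close; first by rewrite !size_Lw.
move=> j hj; case: (ltnP j k) => hjk.
  by rewrite (nth_Lw x (Ordinal hjk)) (nth_Lw y (Ordinal hjk)) H.
by rewrite !nth_default // size_Lw.
Qed.

Lemma step_nz a s : a != 0 -> step a s = (s.2.+1, s.2).
Proof. by rewrite /step => /negbTE->. Qed.

Lemma adj_close n k (x y : V n k) : Hadj x y -> close (pot x) (pot y).
Proof.
case/andP => _ /orP[H|/orP[H|/orP[H|/orP[H|H]]]].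
- apply: (@prefix_close _ _ _ _ k.-1).
    by move=> j hj; apply/eqP; move/forallP: H => /(_ j); rewrite (_ : j.+1 < k) //; lia.
  have [a1 a2] := fold_small (m := drop k.-1 (Lw x)) ltac:(rewrite size_drop size_Lw; lia).
  have [b1 b2] := fold_small (m := drop k.-1 (Lw y)) ltac:(rewrite size_drop size_Lw; lia).
  exact: close_small.
- case/existsP: H => p /andP[hp /forallP H].
  apply: (@prefix_close _ _ _ _ p).
    by move=> j hj; apply/eqP; case/andP: (H j) => /implyP/(_ hj).
  rewrite fold_zero1 ?fold_nz1 //; try (by rewrite -size_eq0 size_drop size_Lw; lia);
  apply: drop_all => j hj; case/andP: (H j) => _ /implyP/(_ hj)/andP[h1 h2]; by [exact h1|exact h2].
- apply: close_sym.
  case/existsP: H => p /andP[hp /forallP H].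
  apply: (@prefix_close _ _ _ _ p).
    by move=> j hj; apply/eqP; case/andP: (H j) => /implyP/(_ hj).
  rewrite fold_zero1 ?fold_nz1 //; try (by rewrite -size_eq0 size_drop size_Lw; lia);
  apply: drop_all => j hj; case/andP: (H j) => _ /implyP/(_ hj)/andP[h1 h2]; by [exact h1|exact h2].
-   case/existsP: H => p /andP[hp /and4P[hx hy _ /forallP H]].
  apply: (@prefix_close _ _ _ _ p).
    by move=> j hj; apply/eqP; case/andP: (H j) => /implyP/(_ hj).
  have hpk : p < size (Lw x) by rewrite size_Lw.
  have hpk' : p < size (Lw y) by rewrite size_Lw.
  rewrite (drop_nth 0 hpk) (drop_nth 0 hpk') (nth_Lw x p) (nth_Lw y p).
  have Ex : all (pred1 0) (drop p.+1 (Lw x)).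
    by apply: drop_all => j hj; case/andP: (H j) => _ /implyP/(_ hj)/andP[h1 h2].
  have Ey : all (pred1 0) (drop p.+1 (Lw y)).
    by apply: drop_all => j hj; case/andP: (H j) => _ /implyP/(_ hj)/andP[h1 h2].
  move/all_pred1P: Ex => ->; move/all_pred1P: Ey => ->.
  rewrite !size_drop !size_Lw /= !step_nz //; exact: close_refl.
- apply: close_sym.
  case/existsP: H => p /andP[hp /and4P[hx hy _ /forallP H]].
  apply: (@prefix_close _ _ _ _ p).
    by move=> j hj; apply/eqP; case/andP: (H j) => /implyP/(_ hj).
  have hpk : p < size (Lw x) by rewrite size_Lw.
  have hpk' : p < size (Lw y) by rewrite size_Lw.
  rewrite (drop_nth 0 hpk) (drop_nth 0 hpk') (nth_Lw x p) (nth_Lw y p).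
  have Ex : all (pred1 0) (drop p.+1 (Lw x)).
    by apply: drop_all => j hj; case/andP: (H j) => _ /implyP/(_ hj)/andP[h1 h2].
  have Ey : all (pred1 0) (drop p.+1 (Lw y)).
    by apply: drop_all => j hj; case/andP: (H j) => _ /implyP/(_ hj)/andP[h1 h2].
  move/all_pred1P: Ex => ->; move/all_pred1P: Ey => ->.
  rewrite !size_drop !size_Lw /= !step_nz //; exact: close_refl.
Qed.

Lemma walk_pot n k d (x y : V n k) : walk_le (@Hadj n k) d x y ->
  (pot x).1 <= (pot y).1 + d /\ (pot x).2 <= (pot y).2 + d.
Proof.
elim: d x => [|d IH] x /=; first by move/eqP->; lia.
case/orP => [/eqP->|/existsP[z /andP[Hxz Hz]]]; first lia.
have := adj_close Hxz; have [h1 h2] := IH z Hz.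
rewrite /close => /and4P[? ? ? ?]; lia.
Qed.

Lemma fold_alt m : forall l b, size l = m.+1 ->
  (forall j, j < m.+1 -> (nth 0 l j == 0) = (odd j == b)) ->
  foldr step (0,0) l = if b then (m.+1, m) else (m, m.+1).
Proof.
elim: m => [|m IH] [|a l] b //= [hs] H.
  move: (H 0 isT); clear H; case: l hs => //= _; rewrite /step; case: eqP => _; case: b => //.
have ha := H 0 isT; rewrite /= in ha.
rewrite (IH l (~~ b) hs); last first.
  move=> j hj; rewrite (H j.+1) //=; by case: (b); case: (odd j).
clear H; rewrite /step; case: b ha => /=; case: eqP => //.
Qed.

Lemma walk_seq (T : finType) (e : rel T) (w : nat -> T) d :
  (forall i, i < d -> e (w i.+1) (w i)) -> walk_le e d (w d) (w 0).
Proof.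
elim: d => [|d IH] H /=; first by [].
apply/orP; right; apply/existsP; exists (w d); rewrite H // IH // => i hi.
apply: H; lia.
Qed.

Lemma gdist_le (T : finType) (e : rel T) x y d :
  walk_le e d x y -> d <= #|T| -> gdist e x y <= d.
Proof.
move=> H hd; rewrite /gdist leqNgt; apply/negP => Hlt.
have := before_find 0 Hlt; rewrite nth_iota ?ltnS // add0n /= H //.
Qed.

Lemma gdist_ge (T : finType) (e : rel T) x y L :
  (forall d, walk_le e d x y -> L <= d) -> L <= #|T|.+1 -> L <= gdist e x y.
Proof.
move=> H hL; rewrite /gdist.
case: (ltnP (find (fun d => walk_le e d x y) (iota 0 #|T|.+1)) (size (iota 0 #|T|.+1))) => hf.
  have : has (fun d => walk_le e d x y) (iota 0 #|T|.+1) by rewrite has_find.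
  move/(nth_find 0); rewrite nth_iota; last by rewrite size_iota in hf.
  rewrite add0n; exact: H.
rewrite size_iota in hf; exact: leq_trans hL hf.
Qed.

Definition Wv n k (hn : 1 < n) (z : V n k) (b : bool) (s : nat) : V n k :=
  [ffun j : 'I_k => if j < s then z j else
     if odd s == b then Ordinal hn else Ordinal (ltnW hn)].

Lemma W_neq n k (hn : 1 < n) (z : V n k) b s :
  (forall j : 'I_k, isz (z j) = (odd j == b)) ->
  s < k -> Wv hn z b s.+1 != Wv hn z b s.
Proof.
move=> Hz hs; apply/negP => /eqP/ffunP/(_ (Ordinal hs)); rewrite !ffunE /= ltnSn ltnn => E.
have := Hz (Ordinal hs); rewrite E /isz /=; by case: (odd s == b).
Qed.

Lemma W_edge n k (hn : 1 < n) (z : V n k) b s :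
  (forall j : 'I_k, isz (z j) = (odd j == b)) ->
  s < k -> Hadj (Wv hn z b s.+1) (Wv hn z b s).
Proof.
move=> Hz hs; rewrite /Hadj (W_neq hn Hz hs) /=.
case: (ltnP s.+1 k) => hsk; last first.
  apply/orP; left; apply/forallP => j; apply/implyP => hj; rewrite !ffunE.
  have hj1 : j < s by lia.
  have hj2 : j < s.+1 by lia.
  by rewrite hj1 hj2.
have Hzs := Hz (Ordinal hs); rewrite /= in Hzs.
have hs2 : (Ordinal hs).+2 <= k by [].
case hb: (odd s == b).
- apply/orP; right; apply/orP; left.
  apply/existsP; exists (Ordinal hs); rewrite hs2 /=.
  apply/forallP => j; rewrite !ffunE; apply/andP; split; apply/implyP => hj.
    have hj2 : j < s.+1 by lia.
    by rewrite hj hj2.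
  have hj1 : (j < s) = false by lia.
  rewrite hj1 hb /isz /= andbT.
  case: (ltngtP j s) => hjs.
  + lia.
  + have hj2 : (j < s.+1) = false by lia.
    have hb2 : (odd s.+1 == b) = false by rewrite /=; case: (b) hb; case: (odd s).
    by rewrite hj2 hb2.
  + have hj2 : (j < s.+1) by lia.
    have -> : j = Ordinal hs by apply: val_inj.
    by rewrite /= ltnSn -/(isz _) Hzs hb.
- apply/orP; right; apply/orP; right; apply/orP; left.
  apply/existsP; exists (Ordinal hs); rewrite hs2 /=.
  apply/forallP => j; rewrite !ffunE; apply/andP; split; apply/implyP => hj.
    have hj2 : j < s.+1 by lia.
    by rewrite hj hj2.
  have hj1 : (j < s) = false by lia.
  rewrite hj1 hb /isz /=.
  case: (ltngtP j s) => hjs.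
  + lia.
  + have hj2 : (j < s.+1) = false by lia.
    have hb2 : (odd s.+1 == b) = true by rewrite /=; case: (b) hb; case: (odd s).
    by rewrite hj2 hb2.
  + have hj2 : (j < s.+1) by lia.
    have -> : j = Ordinal hs by apply: val_inj.
    by rewrite /= ltnSn -/(isz _) Hzs hb.
Qed.

Lemma walkW n k (hn : 1 < n) (z : V n k) b t :
  (forall j : 'I_k, isz (z j) = (odd j == b)) -> t <= k ->
  walk_le (@Hadj n k) (k - t) z (Wv hn z b t).
Proof.
move=> Hz ht.
have Ez : Wv hn z b k = z by apply/ffunP => j; rewrite ffunE ltn_ord.
rewrite -[X in walk_le _ _ X _]Ez.
have := @walk_seq _ (@Hadj n k) (fun i => Wv hn z b (t + i)) (k - t).
rewrite addn0 subnKC //; apply => i hi; rewrite addnS; apply: W_edge => //; lia.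
Qed.

Lemma card_V n k : 1 < n -> k < #|V n k|.
Proof. by move=> hn; rewrite /V card_ffun !card_ord ltn_expl. Qed.

Lemma pot_z n k (z : V n k) b : 1 <= k ->
  (forall j : 'I_k, isz (z j) = (odd j == b)) ->
  pot z = if b then (k, k.-1) else (k.-1, k).
Proof.
move=> hk Hz; rewrite /pot (@fold_alt k.-1 _ b).
- by rewrite prednK.
- by rewrite size_Lw prednK.
move=> j; rewrite prednK // => hj.
by rewrite (nth_Lw z (Ordinal hj)) -/(isz _) Hz.
Qed.

Lemma pot_root n k (hn : 0 < n) : (pot (root_vx k hn)).1 = 0.
Proof.
rewrite /pot; apply: fold_zero; rewrite -(drop0 (Lw _)); apply: drop_all => j _.
by rewrite ffunE.
Qed.

Lemma pot_periph n k (u : V n k) : u \in periph n k -> (pot u).2 = 0.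
Proof.
rewrite inE => /forallP H; rewrite /pot; apply: fold_nz; rewrite -(drop0 (Lw _)).
by apply: drop_all => j _; exact: H.
Qed.

Lemma bigmin_seq_le (I : eqType) (r : seq I) (P : pred I) (F : I -> nat) d w :
  w \in r -> P w -> \big[minn/d]_(u <- r | P u) F u <= F w.
Proof.
elim: r => //= a r IH; rewrite inE big_cons => /orP[/eqP<-|hw] hp.
  by rewrite hp geq_minl.
case: ifP => _; last exact: IH.
by apply: leq_trans (geq_minr _ _) (IH hw hp).
Qed.

Lemma bigmin_le (T : finType) (U : {set T}) (F : T -> nat) d w :
  w \in U -> \big[minn/d]_(u in U) F u <= F w.
Proof. move=> hw; apply: bigmin_seq_le => //; exact: mem_index_enum. Qed.

Theorem mainTheorem7 (n k : nat) (hn : 1 < n) (hk : 1 <= k)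
  (z01 z10 : V n k)
  (H01 : forall j : 'I_k, if odd j.+1 then isz (z01 j) else ~~ isz (z01 j))
  (H10 : forall j : 'I_k, if odd j.+1 then ~~ isz (z10 j) else isz (z10 j)) :
  (gdist (@Hadj n k) z01 (root_vx k (ltnW hn)) = k.-1 /\
   gdist_set (@Hadj n k) z10 (periph n k) = k.-1) /\
  (gdist (@Hadj n k) z10 (root_vx k (ltnW hn)) = k /\
   gdist_set (@Hadj n k) z01 (periph n k) = k).
Proof.
have Z01 : forall j : 'I_k, isz (z01 j) = (odd j == false).
  by move=> j; move: (H01 j) => /=; case: (odd j) => /= [/negbTE -> | ->].
have Z10 : forall j : 'I_k, isz (z10 j) = (odd j == true).
  by move=> j; move: (H10 j) => /=; case: (odd j) => /= [-> | /negbTE ->].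
have hc := card_V k hn.
have P01 := pot_z hk Z01; have P10 := pot_z hk Z10.
have PR := pot_root k (ltnW hn).
have W01_1 : Wv hn z01 false 1 = root_vx k (ltnW hn).
  apply/ffunP => j; rewrite !ffunE; case: ifP => hj //.
  apply: val_inj => /=; apply/eqP; rewrite -/(isz _) Z01.
  by have -> : nat_of_ord j = 0 by lia.
have W01_0 : Wv hn z01 false 0 \in periph n k.
  by rewrite inE; apply/forallP => j; rewrite ffunE.
have W10_1 : Wv hn z10 true 1 \in periph n k.
  rewrite inE; apply/forallP => j; rewrite ffunE; case: ifP => hj //.
  rewrite Z10; by have -> : nat_of_ord j = 0 by lia.
have W10_0 : Wv hn z10 true 0 = root_vx k (ltnW hn).
  by apply/ffunP => j; rewrite !ffunE.
have w01_1 := walkW hn Z01 hk; rewrite W01_1 subn1 in w01_1.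
have w01_0 := walkW hn Z01 (leq0n k); rewrite subn0 in w01_0.
have w10_1 := walkW hn Z10 hk; rewrite subn1 in w10_1.
have w10_0 := walkW hn Z10 (leq0n k); rewrite W10_0 subn0 in w10_0.
split; split.
- apply/eqP; rewrite eqn_leq; apply/andP; split.
    apply: gdist_le w01_1 _; apply: (@leq_trans k); [lia | exact: ltnW hc].
  apply: gdist_ge; last by apply: (@leq_trans k); [lia | exact: leqW (ltnW hc)].
  by move=> d /walk_pot [h1 _]; rewrite P01 PR in h1.
- apply/eqP; rewrite eqn_leq; apply/andP; split.
    rewrite /gdist_set; apply: leq_trans (bigmin_le _ _ W10_1) _.
    apply: gdist_le w10_1 _; apply: (@leq_trans k); [lia | exact: ltnW hc].
  apply: (big_ind (fun v => k.-1 <= v)); first by apply: (@leq_trans k); [lia | exact: leqW (ltnW hc)].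
    by move=> x y hx hy; rewrite leq_min hx hy.
  move=> u hu; apply: gdist_ge; last by apply: (@leq_trans k); [lia | exact: leqW (ltnW hc)].
  by move=> d /walk_pot [_ h2]; rewrite P10 (pot_periph hu) in h2.
- apply/eqP; rewrite eqn_leq; apply/andP; split.
    apply: gdist_le w10_0 _; exact: ltnW hc.
  apply: gdist_ge; last by apply: (@leq_trans k); [lia | exact: leqW (ltnW hc)].
  by move=> d /walk_pot [h1 _]; rewrite P10 PR in h1.
- apply/eqP; rewrite eqn_leq; apply/andP; split.
    rewrite /gdist_set; apply: leq_trans (bigmin_le _ _ W01_0) _.
    apply: gdist_le w01_0 _; exact: ltnW hc.
  apply: (big_ind (fun v => k <= v)); first by exact: leqW (ltnW hc).
    by move=> x y hx hy; rewrite leq_min hx hy.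
  move=> u hu; apply: gdist_ge; last by apply: (@leq_trans k); [lia | exact: leqW (ltnW hc)].
  by move=> d /walk_pot [_ h2]; rewrite P01 (pot_periph hu) in h2.
Qed.
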